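(* Let $b\ge 3$ be an integer and $D \subset \{0,\ldots,b-1\}$ with $2 \le \#D \le b-1$. Let $n \geq 1$ and $p$ be integers and let $\psi(n)>0$ satisfy $\psi(n) < b^{-n}/2$. Put $d_{l,n} = \frac{m_{l}}{(b-1)b^n}$ and $d_{r,n} = \frac{m_{r}}{(b-1)b^n}$. Using the convention that an open ball with non-positive radius is the empty set: (1) If $p b^{-n} \in L_{n} \setminus R_{n}$, then $B\left(\frac{p}{b^{n}},\psi(n)\right) \cap C(b,D) = B\left(\frac{p}{b^{n}} + d_{l,n},\psi(n)-d_{l,n}\right) \cap C(b,D)$. (2) If $p b^{-n} \in R_{n} \setminus L_{n}$, then $B\left(\frac{p}{b^{n}},\psi(n)\right) \cap C(b,D) = B\left(\frac{p}{b^{n}} - d_{r,n},\psi(n)-d_{r,n}\right) \cap C(b,D)$. (3) If $p b^{-n} \in L_{n} \cup R_{n}$, then $B\left(\frac{p}{b^{n}},\psi(n)\right) \cap C(b,D) = \left(B\left(\frac{p}{b^{n}} + d_{l,n},\psi(n)-d_{l,n}\right) \cup B\left(\frac{p}{b^{n}} - d_{r,n},\psi(n)-d_{r,n}\right) \right) \cap C(b,D)$. (4) If $p b^{-n} \notin L_{n} \cup R_{n}$, then $B\left(\frac{p}{b^{n}},\psi(n)\right) \cap C(b,D) = \emptyset$.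
   Context: $C(b,D)$ is the set of $x\in[0,1]$ whose base-$b$ expansion uses only digits from $D$. $B(x,r)$ denotes the open interval $(x-r,x+r)$. The $n$-th level $C_n(b,D) = \{\sum_{i\ge1} x_i b^{-i} \in [0,1] : x_i \in D \text{ for } i=1,\ldots,n\}$ is a union of $(\#D)^n$ closed intervals of length $b^{-n}$; $L_n$ is the set of left endpoints and $R_n$ the set of right endpoints of these intervals (a point may lie in both). $m_l = \min D$ and $m_r = b-1-\max D$. *)

(* Defs.v *)
From Stdlib Require Import Reals Lra Lia ZArith List.
Open Scope R_scope.

(* min D and max D (D nonempty, all entries < b). *)
Definition dmin (b : nat) (D : list nat) : nat := fold_right Nat.min b D.
Definition dmax (D : list nat) : nat := fold_right Nat.max 0%nat D.

Definition m_l (b : nat) (D : list nat) : nat := dmin b D.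
Definition m_r (b : nat) (D : list nat) : nat := (b - 1 - dmax D)%nat.

(* Value of the first n digits: sum_{i=1}^{n} a_i b^{-i}, where the digit
   a_i is stored as a (i-1). *)
Fixpoint prefix_val (b : nat) (a : nat -> nat) (n : nat) : R :=
  match n with
  | O => 0
  | S m => prefix_val b a m + INR (a m) / (INR b ^ (S m))
  end.

Definition Cantor (b : nat) (D : list nat) (x : R) : Prop :=
  0 <= x <= 1 /\
  exists a : nat -> nat,
    (forall k, In (a k) D) /\
    infinite_sum (fun k => INR (a k) / (INR b ^ (S k))) x.

Definition Cantor_level (b : nat) (D : list nat) (n : nat) (x : R) : Prop :=
  0 <= x <= 1 /\
  exists a : nat -> nat,
    (forall k, (a k < b)%nat) /\
    (forall k, (k < n)%nat -> In (a k) D) /\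
    infinite_sum (fun k => INR (a k) / (INR b ^ (S k))) x.

(* The intervals of C_n are [w, w + b^{-n}] where w = sum_{i=1}^n x_i b^{-i},
   x_i in D. L_n: left endpoints; R_n: right endpoints. *)
Definition Lends (b : nat) (D : list nat) (n : nat) (y : R) : Prop :=
  exists a : nat -> nat,
    (forall k, (k < n)%nat -> In (a k) D) /\ y = prefix_val b a n.

Definition Rends (b : nat) (D : list nat) (n : nat) (y : R) : Prop :=
  exists a : nat -> nat,
    (forall k, (k < n)%nat -> In (a k) D) /\ y = prefix_val b a n + / (INR b ^ n).

Definition oball (x r : R) (y : R) : Prop := x - r < y < x + r.

(* Main.v *)
Require Import Defs.
From Stdlib Require Import Reals ZArith List.
From Stdlib Require Import Lra Lia.
Open Scope R_scope.

Lemma dmin_le b D d : In d D -> (dmin b D <= d)%nat.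
Proof.
  induction D as [|x D IH]; simpl; [tauto|].
  intros [->|H]; [lia|]. specialize (IH H). lia.
Qed.

Lemma dmax_ge D d : In d D -> (d <= dmax D)%nat.
Proof.
  induction D as [|x D IH]; simpl; [tauto|].
  intros [->|H]; [lia|]. specialize (IH H). lia.
Qed.

Lemma dmax_lt b D : (1 <= b)%nat -> (forall d, In d D -> (d < b)%nat) -> (dmax D <= b - 1)%nat.
Proof.
  intros Hb. induction D as [|x D IH]; simpl; intros H; [lia|].
  assert (x < b)%nat by (apply H; left; auto).
  assert (dmax D <= b - 1)%nat by (apply IH; intros; apply H; right; auto). lia.
Qed.

Lemma lim_ge (s : nat -> R) y c : infinite_sum s y ->
  (forall eps, eps > 0 -> forall M, exists N, (N >= M)%nat /\ c - eps <= sum_f_R0 s N) -> c <= y.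
Proof.
  intros Hs H. destruct (Rle_or_lt c y) as [?|Hlt]; auto. exfalso.
  destruct (Hs ((c - y)/2)) as [M HM]; [lra|].
  destruct (H ((c-y)/2) ltac:(lra) M) as [N [HN HS]].
  specialize (HM N HN). unfold Rdist in HM. apply Rabs_def2 in HM. lra.
Qed.

Lemma lim_le (s : nat -> R) y c : infinite_sum s y ->
  (exists M, forall N, (N >= M)%nat -> sum_f_R0 s N <= c) -> y <= c.
Proof.
  intros Hs [M H]. destruct (Rle_or_lt y c) as [?|Hlt]; auto. exfalso.
  destruct (Hs ((y - c)/2)) as [M1 HM]; [lra|].
  specialize (HM (max M M1) ltac:(lia)). specialize (H (max M M1) ltac:(lia)).
  unfold Rdist in HM. apply Rabs_def2 in HM. lra.
Qed.

Lemma psum_prefix b a N :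
  sum_f_R0 (fun k => INR (a k) / (INR b ^ (S k))) N = prefix_val b a (S N).
Proof.
  induction N as [|N IH].
  - simpl. lra.
  - change (sum_f_R0 (fun k => INR (a k) / (INR b ^ (S k))) N + INR (a (S N)) / (INR b ^ (S (S N))) = prefix_val b a (S (S N))).
    rewrite IH. reflexivity.
Qed.

Lemma prefix_int b a n : (1 <= b)%nat -> exists k : nat, prefix_val b a n = INR k / INR b ^ n.
Proof.
  intros Hb1. induction n as [|n [k Hk]].
  - exists 0%nat. simpl. lra.
  - exists (k * b + a n)%nat. simpl prefix_val. rewrite Hk.
    rewrite plus_INR, mult_INR. simpl pow.
    assert (E : INR b <> 0) by (apply not_0_INR; lia).
    assert (INR b ^ n <> 0) by (apply pow_nonzero; auto).
    field. auto.
Qed.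

Lemma tail_bounds b a n (ml dM : nat) : (2 <= b)%nat ->
  (forall k, (ml <= a k <= dM)%nat) -> forall m,
  INR ml * (/ INR b ^ n - / INR b ^ (n + m)) / (INR b - 1)
    <= prefix_val b a (n + m) - prefix_val b a n <=
  INR dM * (/ INR b ^ n - / INR b ^ (n + m)) / (INR b - 1).
Proof.
  intros Hb Ha. assert (HB : 2 <= INR b) by (replace 2 with (INR 2) by (simpl; lra); apply le_INR; lia).
  induction m as [|m IH].
  - rewrite Nat.add_0_r. unfold Rdiv. rewrite !Rminus_diag, !Rmult_0_r, !Rmult_0_l. lra.
  - rewrite Nat.add_succ_r. simpl prefix_val. simpl pow.
    set (P := INR b ^ (n + m)) in *.
    assert (HP : 0 < P) by (apply pow_lt; lra).
    set (T := / INR b ^ n) in *.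
    assert (E : forall c, c * (T - / (INR b * P)) / (INR b - 1) =
               c * (T - / P) / (INR b - 1) + c / (INR b * P)).
    { intros c. field. lra. }
    rewrite !E. destruct (Ha (n+m)%nat) as [H1 H2].
    apply le_INR in H1. apply le_INR in H2.
    assert (0 < INR b * P) by nra.
    assert (INR ml / (INR b * P) <= INR (a (n+m)%nat) / (INR b * P)).
    { unfold Rdiv. apply Rmult_le_compat_r; [left; apply Rinv_0_lt_compat; auto | auto]. }
    assert (INR (a (n+m)%nat) / (INR b * P) <= INR dM / (INR b * P)).
    { unfold Rdiv. apply Rmult_le_compat_r; [left; apply Rinv_0_lt_compat; auto | auto]. }
    lra.
Qed.

Lemma cantor_struct b D n y : (2 <= b)%nat -> (forall d, In d D -> (d < b)%nat) ->
  Cantor b D y -> exists a k, (forall j, (j < n)%nat -> In (a j) D) /\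
   prefix_val b a n = INR k / INR b ^ n /\
   prefix_val b a n + INR (m_l b D) / ((INR b - 1) * INR b ^ n) <= y <=
   prefix_val b a n + / INR b ^ n - INR (m_r b D) / ((INR b - 1) * INR b ^ n).
Proof.
  intros Hb HD [_ [a [Hin Hs]]].
  destruct (prefix_int b a n ltac:(lia)) as [k Hk].
  exists a, k. split; [intros; apply Hin|]. split; [exact Hk|].
  assert (HB : 2 <= INR b) by (replace 2 with (INR 2) by (simpl; lra); apply le_INR; lia).
  assert (HBn : 0 < INR b ^ n) by (apply pow_lt; lra).
  set (ml := m_l b D). set (dM := dmax D).
  assert (Ha : forall j, (ml <= a j <= dM)%nat).
  { intros j. split; [apply dmin_le | apply dmax_ge]; apply Hin. }
  assert (HdM : (dM <= b - 1)%nat) by (apply dmax_lt; [lia|auto]).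
  assert (Emr : INR (m_r b D) = INR b - 1 - INR dM).
  { unfold m_r. fold dM. rewrite minus_INR by lia. rewrite minus_INR by lia. simpl. lra. }
  rewrite Emr.
  set (w := prefix_val b a n) in *. set (T := / INR b ^ n).
  assert (HT : 0 < T) by (apply Rinv_0_lt_compat; auto).
  assert (E1 : INR ml / ((INR b - 1) * INR b ^ n) = INR ml * T / (INR b - 1)).
  { unfold T. field. lra. }
  assert (E2 : T - (INR b - 1 - INR dM) / ((INR b - 1) * INR b ^ n) = INR dM * T / (INR b - 1)).
  { unfold T. field. lra. }
  rewrite E1. replace (w + T - (INR b - 1 - INR dM) / ((INR b - 1) * INR b ^ n))
    with (w + INR dM * T / (INR b - 1)) by lra.
  assert (Hml0 : 0 <= INR ml) by apply pos_INR.
  assert (HdM0 : 0 <= INR dM) by apply pos_INR.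
  assert (Htail : forall N, (N >= n)%nat ->
     INR ml * (T - / INR b ^ (S N)) / (INR b - 1) <= sum_f_R0 (fun k => INR (a k) / (INR b ^ (S k))) N - w
     <= INR dM * (T - / INR b ^ (S N)) / (INR b - 1)).
  { intros N HN. rewrite psum_prefix. replace (S N) with (n + (S N - n))%nat by lia.
    apply tail_bounds; auto. }
  split.
  - apply (lim_ge _ _ _ Hs). intros eps Heps M.
    assert (Hq : Rabs (/ INR b) < 1).
    { rewrite Rabs_pos_eq. rewrite <- Rinv_1; apply Rinv_lt_contravar; lra. left; apply Rinv_0_lt_compat; lra. }
    destruct (pow_lt_1_zero _ Hq (eps * (INR b - 1) / (INR ml + 1))) as [N0 HN0].
    { apply Rdiv_lt_0_compat; nra. }
    set (N := max M (max n N0)). exists N. split; [lia|].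
    destruct (Htail N ltac:(lia)) as [H1 _].
    specialize (HN0 (S N) ltac:(lia)). rewrite pow_inv in HN0.
    set (q := / INR b ^ S N) in *.
    assert (Hq0 : 0 < q) by (apply Rinv_0_lt_compat; apply pow_lt; lra).
    rewrite Rabs_pos_eq in HN0 by lra.
    assert (q * (INR ml + 1) < eps * (INR b - 1)).
    { apply (Rmult_lt_compat_r (INR ml + 1)) in HN0; [|lra].
      unfold Rdiv in HN0. rewrite Rmult_assoc, Rinv_l in HN0 by lra. lra. }
    assert (E3 : INR ml * (T - q) / (INR b - 1) = INR ml * T / (INR b - 1) - INR ml * q / (INR b - 1)).
    { field. lra. }
    assert (INR ml * q / (INR b - 1) <= eps).
    { apply (Rmult_le_reg_r (INR b - 1)); [lra|].
      unfold Rdiv. rewrite Rmult_assoc, Rinv_l by lra. nra. }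
    lra.
  - apply (lim_le _ _ _ Hs). exists n. intros N HN.
    destruct (Htail N HN) as [_ H2].
    assert (0 < / INR b ^ S N) by (apply Rinv_0_lt_compat; apply pow_lt; lra).
    assert (INR dM * (T - / INR b ^ (S N)) / (INR b - 1) <= INR dM * T / (INR b - 1)).
    { unfold Rdiv. apply Rmult_le_compat_r. left; apply Rinv_0_lt_compat; lra.
      apply Rmult_le_compat_l; lra. }
    lra.
Qed.


Lemma key b D n p psi y : (2 <= b)%nat -> (forall d, In d D -> (d < b)%nat) ->
  0 < psi -> psi < / (INR b ^ n) / 2 ->
  oball (IZR p / (INR b ^ n)) psi y -> Cantor b D y ->
  (Lends b D n (IZR p / (INR b ^ n)) /\
     IZR p / (INR b ^ n) + INR (m_l b D) / ((INR b - 1) * INR b ^ n) <= y) \/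
  (Rends b D n (IZR p / (INR b ^ n)) /\
     y <= IZR p / (INR b ^ n) - INR (m_r b D) / ((INR b - 1) * INR b ^ n)).
Proof.
  intros Hb HD Hpsi Hpsi2 Hball HC.
  destruct (cantor_struct b D n y Hb HD HC) as [a [k [Hin [Hw [Hlo Hhi]]]]].
  assert (HB : 2 <= INR b) by (replace 2 with (INR 2) by (simpl; lra); apply le_INR; lia).
  assert (HBn : 0 < INR b ^ n) by (apply pow_lt; lra).
  set (T := / INR b ^ n) in *.
  assert (HT : 0 < T) by (apply Rinv_0_lt_compat; auto).
  assert (Hdl : 0 <= INR (m_l b D) / ((INR b - 1) * INR b ^ n)).
  { unfold Rdiv; apply Rmult_le_pos; [apply pos_INR | left; apply Rinv_0_lt_compat; apply Rmult_lt_0_compat; lra]. }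
  assert (Hdr : 0 <= INR (m_r b D) / ((INR b - 1) * INR b ^ n)).
  { unfold Rdiv; apply Rmult_le_pos; [apply pos_INR | left; apply Rinv_0_lt_compat; apply Rmult_lt_0_compat; lra]. }
  set (dl := INR (m_l b D) / ((INR b - 1) * INR b ^ n)) in *.
  set (dr := INR (m_r b D) / ((INR b - 1) * INR b ^ n)) in *.
  unfold oball in Hball.
  set (x0 := IZR p / INR b ^ n) in *.
  assert (Ex0 : x0 = IZR p * T) by reflexivity.
  assert (Ew : prefix_val b a n = INR k * T) by (rewrite Hw; reflexivity).
  set (w := prefix_val b a n) in *.
  assert (H1 : (INR k - IZR p) * T < / 2 * T) by (unfold Rdiv in Hpsi2; nra).
  assert (H2 : (- (3 / 2)) * T < (INR k - IZR p) * T) by (unfold Rdiv in Hpsi2; nra).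
  apply Rmult_lt_reg_r in H1; auto. apply Rmult_lt_reg_r in H2; auto.
  rewrite INR_IZR_INZ in H1, H2, Ew. set (K := Z.of_nat k) in *.
  rewrite <- minus_IZR in H1, H2.
  assert (Z1 : (K - p < 1)%Z) by (apply lt_IZR; lra).
  assert (Z2 : (-2 < K - p)%Z) by (apply lt_IZR; simpl; lra).
  assert (Kc : K = p \/ K = (p - 1)%Z) by lia.
  destruct Kc as [-> | ->].
  - left. split; [|lra]. exists a. split; auto.
  - right. rewrite minus_IZR in Ew. simpl in Ew. split; [|lra].
    exists a. split; auto. fold T. fold w. rewrite Ew, Ex0. ring.
Qed.

Theorem lemma3p2 (b : nat) (D : list nat) (n : nat) (p : Z) (psi : R) :
  (3 <= b)%nat ->
  NoDup D -> (forall d, In d D -> (d < b)%nat) ->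
  (2 <= length D)%nat -> (length D <= b - 1)%nat ->
  (1 <= n)%nat ->
  0 < psi -> psi < / (INR b ^ n) / 2 ->
  let x0 := IZR p / (INR b ^ n) in
  let dl := INR (m_l b D) / ((INR b - 1) * INR b ^ n) in
  let dr := INR (m_r b D) / ((INR b - 1) * INR b ^ n) in
  ((Lends b D n x0 /\ ~ Rends b D n x0) ->
     forall y, (oball x0 psi y /\ Cantor b D y) <->
               (oball (x0 + dl) (psi - dl) y /\ Cantor b D y)) /\
  ((Rends b D n x0 /\ ~ Lends b D n x0) ->
     forall y, (oball x0 psi y /\ Cantor b D y) <->
               (oball (x0 - dr) (psi - dr) y /\ Cantor b D y)) /\
  ((Lends b D n x0 \/ Rends b D n x0) ->
     forall y, (oball x0 psi y /\ Cantor b D y) <->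
               ((oball (x0 + dl) (psi - dl) y \/ oball (x0 - dr) (psi - dr) y)
                /\ Cantor b D y)) /\
  (~ (Lends b D n x0 \/ Rends b D n x0) ->
     forall y, ~ (oball x0 psi y /\ Cantor b D y)).
Proof.
  intros Hb HND HD HL1 HL2 Hn Hpsi Hpsi2 x0 dl dr.
  assert (Hb2 : (2 <= b)%nat) by lia.
  assert (HB : 2 <= INR b) by (replace 2 with (INR 2) by (simpl; lra); apply le_INR; lia).
  assert (HBn : 0 < INR b ^ n) by (apply pow_lt; lra).
  assert (Hdl : 0 <= dl).
  { unfold dl; unfold Rdiv; apply Rmult_le_pos; [apply pos_INR | left; apply Rinv_0_lt_compat; apply Rmult_lt_0_compat; lra]. }
  assert (Hdr : 0 <= dr).
  { unfold dr; unfold Rdiv; apply Rmult_le_pos; [apply pos_INR | left; apply Rinv_0_lt_compat; apply Rmult_lt_0_compat; lra]. }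
  assert (K : forall y, oball x0 psi y -> Cantor b D y ->
     (Lends b D n x0 /\ x0 + dl <= y) \/ (Rends b D n x0 /\ y <= x0 - dr)).
  { intros y H1 H2. exact (key b D n p psi y Hb2 HD Hpsi Hpsi2 H1 H2). }
  unfold oball in *.
  split; [|split; [|split]].
  - intros [HLx HRx] y. split.
    + intros [Hy HC]. split; auto. destruct (K y Hy HC) as [[_ ?]|[? _]]; [lra|tauto].
    + intros [Hy HC]. split; auto. lra.
  - intros [HRx HLx] y. split.
    + intros [Hy HC]. split; auto. destruct (K y Hy HC) as [[? _]|[_ ?]]; [tauto|lra].
    + intros [Hy HC]. split; auto. lra.
  - intros _ y. split.
    + intros [Hy HC]. split; auto. destruct (K y Hy HC) as [[_ ?]|[_ ?]]; [left|right]; lra.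
    + intros [Hy HC]. split; auto. destruct Hy; lra.
  - intros HN y [Hy HC]. destruct (K y Hy HC) as [[? _]|[? _]]; tauto.
Qed.
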